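(* Let $A \subseteq \mathbb{C}$ be a countable set, and for each $\alpha \in A$ and each integer $s \geq 0$ let $E_{\alpha,s} \subseteq \mathbb{C}$ be a dense subset of $\mathbb{C}$. Then there exists a transcendental entire function $f:\mathbb{C}\to\mathbb{C}$ such that $f^{(s)}(\alpha) \in E_{\alpha,s}$ for all $\alpha \in A$ and all integers $s \geq 0$.
   Context: A transcendental entire function is an entire function $\mathbb{C}\to\mathbb{C}$ that is not a polynomial. $f^{(s)}$ denotes the $s$-th derivative of $f$, with $f^{(0)}=f$. *)

(* Defs.v *)
From Stdlib Require Import Reals.
Open Scope R_scope.

Definition Cx : Type := (R * R)%type.
Definition C0 : Cx := (0, 0).
Definition C1 : Cx := (1, 0).
Definition Cadd (z w : Cx) : Cx := (fst z + fst w, snd z + snd w).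
Definition Copp (z : Cx) : Cx := (- fst z, - snd z).
Definition Csub (z w : Cx) : Cx := Cadd z (Copp w).
Definition Cmul (z w : Cx) : Cx :=
  (fst z * fst w - snd z * snd w, fst z * snd w + snd z * fst w).
Definition Cnorm (z : Cx) : R := sqrt (fst z * fst z + snd z * snd z).

Fixpoint Cpow (z : Cx) (n : nat) : Cx :=
  match n with O => C1 | S m => Cmul z (Cpow z m) end.

Fixpoint Csum (c : nat -> Cx) (n : nat) : Cx :=
  match n with O => c O | S m => Cadd (Csum c m) (c (S m)) end.

Definition C_derivable_lim (f : Cx -> Cx) (z l : Cx) : Prop :=
  forall eps : R, 0 < eps -> exists delta : R, 0 < delta /\
    forall h : Cx, 0 < Cnorm h -> Cnorm h < delta ->
      Cnorm (Csub (Csub (f (Cadd z h)) (f z)) (Cmul l h)) <= eps * Cnorm h.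

Definition entire (f : Cx -> Cx) : Prop :=
  forall z : Cx, exists l : Cx, C_derivable_lim f z l.

Definition is_polynomial (f : Cx -> Cx) : Prop :=
  exists (n : nat) (c : nat -> Cx),
    forall z : Cx, f z = Csum (fun k => Cmul (c k) (Cpow z k)) n.

Definition transcendental_entire (f : Cx -> Cx) : Prop :=
  entire f /\ ~ is_polynomial f.

Definition derivatives_of (f : Cx -> Cx) (D : nat -> Cx -> Cx) : Prop :=
  D O = f /\ forall (s : nat) (z : Cx), C_derivable_lim (D s) z (D (S s) z).

Definition countable_set (A : Cx -> Prop) : Prop :=
  exists g : nat -> Cx, forall z : Cx, A z -> exists n : nat, g n = z.

Definition dense_in_C (E : Cx -> Prop) : Prop :=
  forall (z : Cx) (eps : R), 0 < eps -> exists w : Cx, E w /\ Cnorm (Csub w z) < eps.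

(* Main.v *)
From Pilot Require Import Defs.
From Stdlib Require Import Reals.
From Stdlib Require Import Lra Lia Psatz ClassicalEpsilon FunctionalExtensionality Classical.
Import Pilot.Defs.
Open Scope R_scope.

Lemma Cx_eq' (z w : Cx) : fst z = fst w -> snd z = snd w -> z = w.
Proof. destruct z, w; simpl; intros; subst; reflexivity. Qed.

Lemma Cx_ring : ring_theory C0 C1 Cadd Cmul Csub Copp (@eq Cx).
Proof.
  split; intros; apply Cx_eq'; unfold Cadd, Cmul, Csub, Copp, C0, C1; simpl; ring.
Qed.
Add Ring CxRing : Cx_ring.

Definition n1 (z : Cx) : R := Rabs (fst z) + Rabs (snd z).

Lemma n1_ge0 z : 0 <= n1 z.
Proof. unfold n1; pose proof (Rabs_pos (fst z)); pose proof (Rabs_pos (snd z)); lra. Qed.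

Lemma n1_add z w : n1 (Cadd z w) <= n1 z + n1 w.
Proof. unfold n1, Cadd; simpl.
  pose proof (Rabs_triang (fst z) (fst w)); pose proof (Rabs_triang (snd z) (snd w)); lra. Qed.

Lemma n1_opp z : n1 (Copp z) = n1 z.
Proof. unfold n1, Copp; simpl; rewrite !Rabs_Ropp; reflexivity. Qed.

Lemma n1_sub z w : n1 (Csub z w) <= n1 z + n1 w.
Proof. unfold Csub; rewrite <- (n1_opp w); apply n1_add. Qed.

Lemma n1_mul z w : n1 (Cmul z w) <= n1 z * n1 w.
Proof. unfold n1, Cmul; simpl.
  destruct z as [a b]; destruct w as [c d]; simpl.
  pose proof (Rabs_triang (a*c) (- (b*d))); pose proof (Rabs_triang (a*d) (b*c)).
  rewrite Rabs_Ropp in H. rewrite !Rabs_mult in H, H0.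
  pose proof (Rabs_pos a); pose proof (Rabs_pos b); pose proof (Rabs_pos c); pose proof (Rabs_pos d).
  unfold Rminus; nra. Qed.

Lemma fst_le_n1 z : Rabs (fst z) <= n1 z.
Proof. unfold n1; pose proof (Rabs_pos (snd z)); lra. Qed.
Lemma snd_le_n1 z : Rabs (snd z) <= n1 z.
Proof. unfold n1; pose proof (Rabs_pos (fst z)); lra. Qed.

Lemma Cnorm_le_n1 z : Cnorm z <= n1 z.
Proof. unfold Cnorm, n1.
  apply Rsqr_incr_0_var; [| pose proof (Rabs_pos (fst z)); pose proof (Rabs_pos (snd z)); lra].
  rewrite Rsqr_sqrt by nra. unfold Rsqr.
  pose proof (Rabs_pos (fst z)); pose proof (Rabs_pos (snd z)).
  assert (Rabs (fst z) * Rabs (fst z) = fst z * fst z) by (rewrite <- Rabs_mult; apply Rabs_right; nra).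
  assert (Rabs (snd z) * Rabs (snd z) = snd z * snd z) by (rewrite <- Rabs_mult; apply Rabs_right; nra).
  nra. Qed.

Lemma abs_le_Cnorm_fst z : Rabs (fst z) <= Cnorm z.
Proof. unfold Cnorm. rewrite <- sqrt_Rsqr_abs. apply sqrt_le_1_alt. unfold Rsqr; nra. Qed.
Lemma abs_le_Cnorm_snd z : Rabs (snd z) <= Cnorm z.
Proof. unfold Cnorm. rewrite <- sqrt_Rsqr_abs. apply sqrt_le_1_alt. unfold Rsqr; nra. Qed.

Lemma n1_le_Cnorm z : n1 z <= 2 * Cnorm z.
Proof. unfold n1; pose proof (abs_le_Cnorm_fst z); pose proof (abs_le_Cnorm_snd z); lra. Qed.

Lemma n1_C1 : n1 C1 = 1.
Proof. unfold n1, C1; simpl; rewrite Rabs_R1, Rabs_R0; ring. Qed.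

Lemma n1_pow z k : n1 (Cpow z k) <= n1 z ^ k.
Proof. induction k; simpl. rewrite n1_C1; lra.
  eapply Rle_trans; [apply n1_mul|]. apply Rmult_le_compat_l; [apply n1_ge0|exact IHk]. Qed.

Lemma n1_scal (t : R) z : 0 <= t -> n1 (Cmul (t, 0) z) = t * n1 z.
Proof. intros; unfold n1, Cmul; simpl.
  replace (t * fst z - 0 * snd z) with (t * fst z) by ring.
  replace (t * snd z + 0 * fst z) with (t * snd z) by ring.
  rewrite !Rabs_mult, Rabs_right by lra; ring. Qed.

Lemma n1_zero z : n1 z = 0 -> z = C0.
Proof. unfold n1; intros. pose proof (Rabs_pos (fst z)); pose proof (Rabs_pos (snd z)).
  apply Cx_eq'; simpl; (destruct (Req_dec (fst z) 0) as [e|e]; [|apply Rabs_no_R0 in e; lra]);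
  (destruct (Req_dec (snd z) 0) as [e'|e']; [|apply Rabs_no_R0 in e'; lra]); auto. Qed.

(* finite sums, exclusive upper bound *)
Fixpoint csum (u : nat -> Cx) (K : nat) : Cx :=
  match K with O => C0 | S K => Cadd (csum u K) (u K) end.
Fixpoint rsum (u : nat -> R) (K : nat) : R :=
  match K with O => 0 | S K => rsum u K + u K end.

Lemma rsum_ext u v K : (forall k, (k < K)%nat -> u k = v k) -> rsum u K = rsum v K.
Proof. induction K; simpl; intros; auto. rewrite IHK by (intros; apply H; lia). rewrite H by lia; auto. Qed.
Lemma rsum_le u v K : (forall k, (k < K)%nat -> u k <= v k) -> rsum u K <= rsum v K.
Proof. induction K; simpl; intros. lra. assert (rsum u K <= rsum v K) by (apply IHK; intros; apply H; lia).
  specialize (H K ltac:(lia)); lra. Qed.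
Lemma rsum_nonneg u K : (forall k, 0 <= u k) -> 0 <= rsum u K.
Proof. intros H; induction K; simpl. lra. specialize (H K). lra. Qed.
Lemma rsum_mono u K L : (forall k, 0 <= u k) -> (K <= L)%nat -> rsum u K <= rsum u L.
Proof. intros H HKL; induction HKL; simpl. lra. specialize (H m); lra. Qed.
Lemma rsum_scal c u K : rsum (fun k => c * u k) K = c * rsum u K.
Proof. induction K; simpl. ring. rewrite IHK; ring. Qed.
Lemma rsum_shift u K : rsum u (S K) = u O + rsum (fun k => u (S k)) K.
Proof. induction K. simpl; ring. change (rsum u (S (S K))) with (rsum u (S K) + u (S K)).
  rewrite IHK; simpl; ring. Qed.
Lemma rsum_geom K : rsum (fun k => (/2)^k) K <= 2.
Proof. assert (forall K, rsum (fun k => (/2)^k) K = 2 - 2 * (/2)^K).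
  { induction K0; simpl. field. rewrite IHK0. field. }
  rewrite H. pose proof (pow_le (/2) K ltac:(lra)). lra. Qed.

Lemma n1_csum u K : n1 (csum u K) <= rsum (fun k => n1 (u k)) K.
Proof. induction K; simpl. unfold n1, C0; simpl; rewrite Rabs_R0; lra.
  eapply Rle_trans; [apply n1_add|]. lra. Qed.
Lemma fst_csum u K : fst (csum u K) = rsum (fun k => fst (u k)) K.
Proof. induction K; simpl; auto. rewrite IHK; auto. Qed.
Lemma snd_csum u K : snd (csum u K) = rsum (fun k => snd (u k)) K.
Proof. induction K; simpl; auto. rewrite IHK; auto. Qed.

Lemma abs_conv (u : nat -> R) C : (forall K, rsum (fun k => Rabs (u k)) K <= C) ->
  exists l, Un_cv (rsum u) l.
Proof.
  intros HC. set (T := rsum (fun k => Rabs (u k))).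
  assert (Tg : Un_growing T). { intro n; unfold T; simpl; pose proof (Rabs_pos (u n)); lra. }
  assert (Tb : has_ub T). { exists C; intros x [n ->]; apply HC. }
  destruct (growing_cv T Tg Tb) as [lT HT].
  assert (HcT := CV_Cauchy T (exist _ lT HT)).
  assert (key : forall n m, (n <= m)%nat -> Rabs (rsum u m - rsum u n) <= T m - T n).
  { intros n m H; induction H. unfold Rminus; rewrite !Rplus_opp_r, Rabs_R0; lra.
    unfold T in *; simpl.
    replace (rsum u m + u m - rsum u n) with ((rsum u m - rsum u n) + u m) by ring.
    eapply Rle_trans; [apply Rabs_triang|]. lra. }
  assert (Cauchy_crit (rsum u)).
  { intros eps Heps. destruct (HcT eps Heps) as [N HN]. exists N; intros n m Hn Hm.
    unfold Rdist in *. destruct (Nat.le_ge_cases n m).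
    - specialize (key n m H). specialize (HN m n Hm Hn).
      eapply Rle_lt_trans; [|exact HN]. rewrite Rabs_minus_sym. eapply Rle_trans; [exact key|].
      apply Rle_abs.
    - specialize (key m n H). specialize (HN n m Hn Hm).
      eapply Rle_lt_trans; [|exact HN]. eapply Rle_trans; [exact key|]. apply Rle_abs. }
  destruct (R_complete _ H) as [l Hl]; exists l; exact Hl.
Qed.

Definition ccv (u : nat -> Cx) (l : Cx) : Prop :=
  Un_cv (fun K => fst (u K)) (fst l) /\ Un_cv (fun K => snd (u K)) (snd l).

Lemma ccv_add u v l1 l2 : ccv u l1 -> ccv v l2 -> ccv (fun K => Cadd (u K) (v K)) (Cadd l1 l2).
Proof. intros [a b] [c d]; split; simpl; apply CV_plus; auto. Qed.
Lemma ccv_sub u v l1 l2 : ccv u l1 -> ccv v l2 -> ccv (fun K => Csub (u K) (v K)) (Csub l1 l2).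
Proof. intros [a b] [c d]; split; simpl; apply CV_minus; auto. Qed.
Lemma Un_cv_const c : Un_cv (fun _ => c) c.
Proof. intros e He; exists O; intros; unfold Rdist; rewrite Rminus_diag, Rabs_R0; lra. Qed.
Lemma ccv_mulc u l c : ccv u l -> ccv (fun K => Cmul (u K) c) (Cmul l c).
Proof. intros [a b]; split; simpl.
  - apply CV_minus; apply CV_mult; auto; apply Un_cv_const.
  - apply CV_plus; apply CV_mult; auto; apply Un_cv_const. Qed.
Lemma ccv_shift u l : ccv u l -> ccv (fun K => u (S K)) l.
Proof. intros [a b]; split; intros e He; [destruct (a e He) as [N HN] | destruct (b e He) as [N HN]];
  exists N; intros; apply HN; lia. Qed.
Lemma ccv_sub_seq u l (phi : nat -> nat) : (forall m, (m <= phi m)%nat) -> ccv u l -> ccv (fun m => u (phi m)) l.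
Proof. intros Hp [a b]; split; intros e He; [destruct (a e He) as [N HN] | destruct (b e He) as [N HN]];
  exists N; intros; apply HN; specialize (Hp n); lia. Qed.
Lemma ccv_unique u l1 l2 : ccv u l1 -> ccv u l2 -> l1 = l2.
Proof. intros [a b] [c d]; apply Cx_eq'; eapply UL_sequence; eauto. Qed.
Lemma ccv_const c : ccv (fun _ => c) c.
Proof. split; apply Un_cv_const. Qed.
Lemma Un_cv_abs u l : Un_cv u l -> Un_cv (fun K => Rabs (u K)) (Rabs l).
Proof. intros H e He; destruct (H e He) as [N HN]; exists N; intros n Hn; specialize (HN n Hn).
  unfold Rdist in *; eapply Rle_lt_trans; [apply Rabs_triang_inv2|exact HN]. Qed.
Lemma ccv_n1_le u l B : ccv u l -> (forall K, n1 (u K) <= B) -> n1 l <= B.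
Proof. intros [a b] H.
  eapply Rle_cv_lim with (Un := fun K => n1 (u K)) (Vn := fun _ => B).
  exact H. 2: apply Un_cv_const.
  unfold n1; apply CV_plus; apply Un_cv_abs; auto. Qed.

Definition ps (a : nat -> Cx) (z : Cx) (K : nat) : Cx :=
  csum (fun k => Cmul (a k) (Cpow z k)) K.
Definition bnd (a : nat -> Cx) : Prop :=
  forall r, 0 <= r -> exists C, forall K, rsum (fun k => n1 (a k) * r ^ k) K <= C.
Definition Rlim (u : nat -> R) : R := epsilon (inhabits 0) (fun l => Un_cv u l).
Lemma Rlim_spec u : (exists l, Un_cv u l) -> Un_cv u (Rlim u).
Proof. intros H; unfold Rlim; apply (epsilon_spec (inhabits 0) (fun l => Un_cv u l)); exact H. Qed.
Definition pser (a : nat -> Cx) (z : Cx) : Cx :=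
  (Rlim (fun K => fst (ps a z K)), Rlim (fun K => snd (ps a z K))).

Lemma pser_cv a z : bnd a -> ccv (ps a z) (pser a z).
Proof.
  intros Hb. destruct (Hb (n1 z) (n1_ge0 z)) as [C HC].
  assert (tb : forall k, n1 (Cmul (a k) (Cpow z k)) <= n1 (a k) * n1 z ^ k).
  { intro k; eapply Rle_trans; [apply n1_mul|]. apply Rmult_le_compat_l; [apply n1_ge0|apply n1_pow]. }
  split; unfold pser; simpl; apply Rlim_spec.
  - assert (E : (fun K => fst (ps a z K)) = rsum (fun k => fst (Cmul (a k) (Cpow z k)))).
    { apply functional_extensionality; intro K; unfold ps; apply fst_csum. }
    rewrite E; apply (abs_conv _ C); intro K; eapply Rle_trans; [|apply (HC K)].
    apply rsum_le; intros k _; eapply Rle_trans; [apply fst_le_n1|apply tb].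
  - assert (E : (fun K => snd (ps a z K)) = rsum (fun k => snd (Cmul (a k) (Cpow z k)))).
    { apply functional_extensionality; intro K; unfold ps; apply snd_csum. }
    rewrite E; apply (abs_conv _ C); intro K; eapply Rle_trans; [|apply (HC K)].
    apply rsum_le; intros k _; eapply Rle_trans; [apply snd_le_n1|apply tb].
Qed.

Definition ofR (t : R) : Cx := (t, 0).
Definition Dc (a : nat -> Cx) (k : nat) : Cx := Cmul (ofR (INR (S k))) (a (S k)).

Lemma INR_le_pow2 n : INR n <= 2 ^ n.
Proof. induction n. simpl; lra. rewrite S_INR; simpl. pose proof (pow_R1_Rle 2 n ltac:(lra)). lra. Qed.

Lemma bnd_Dc a : bnd a -> bnd (Dc a).
Proof.
  intros Hb r Hr. destruct (Hb (2 * (r + 1))) as [C HC]; [lra|].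
  exists C; intro K. eapply Rle_trans; [|apply (HC (S K))].
  rewrite rsum_shift. eapply Rle_trans with (0 + rsum (fun k => n1 (a (S k)) * (2 * (r + 1)) ^ (S k)) K).
  2: { apply Rplus_le_compat_r. apply Rmult_le_pos; [apply n1_ge0|apply pow_le; lra]. }
  rewrite Rplus_0_l; apply rsum_le; intros k _. unfold Dc, ofR. rewrite n1_scal by (apply pos_INR).
  rewrite Rpow_mult_distr.
  pose proof (INR_le_pow2 (S k)). pose proof (n1_ge0 (a (S k))).
  assert (r ^ k <= (r+1) ^ S k).
  { apply Rle_trans with ((r+1)^k). apply pow_incr; lra. apply Rle_pow; [lra|lia]. }
  pose proof (pow_le r k Hr). pose proof (pos_INR (S k)).
  replace (INR (S k) * n1 (a (S k)) * r ^ k) with (n1 (a (S k)) * (INR (S k) * r ^ k)) by ring.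
  replace (n1 (a (S k)) * (2 ^ S k * (r + 1) ^ S k)) with (n1 (a (S k)) * (2 ^ S k * (r + 1) ^ S k)) by ring.
  apply Rmult_le_compat_l; [lra|]. apply Rmult_le_compat; lra.
Qed.

Definition dd (z h : Cx) (k : nat) : Cx :=
  Csub (Csub (Cpow (Cadd z h) (S k)) (Cpow z (S k))) (Cmul (Cmul (ofR (INR (S k))) (Cpow z k)) h).

Lemma ofR_S k : ofR (INR (S (S k))) = Cadd (ofR (INR (S k))) C1.
Proof. apply Cx_eq'; unfold ofR, Cadd, C1; cbv [fst snd]; [rewrite (S_INR (S k)) | ]; ring. Qed.

Lemma dd_rec z h k : dd z h (S k) =
  Cadd (Cmul (Cadd z h) (dd z h k)) (Cmul (Cmul (ofR (INR (S k))) (Cpow z k)) (Cmul h h)).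
Proof. unfold dd. rewrite ofR_S. change (Cpow ?w (S (S k))) with (Cmul w (Cpow w (S k))).
  change (Cpow ?w (S k)) with (Cmul w (Cpow w k)). ring. Qed.

Lemma dd_0 z h : dd z h 0 = C0.
Proof. unfold dd; simpl. replace (ofR (1)) with C1 by reflexivity. ring. Qed.

Lemma dd_bound z h k : n1 h <= 1 ->
  n1 (dd z h k) <= INR k ^ 2 * (n1 z + 1) ^ k * (n1 h ^ 2).
Proof.
  intros Hh. set (rho := n1 z + 1). assert (Hr : 1 <= rho) by (pose proof (n1_ge0 z); unfold rho; lra).
  pose proof (n1_ge0 h) as Hh0. set (H := n1 h ^ 2). assert (HH : 0 <= H) by (unfold H; nra).
  induction k.
  - rewrite dd_0. unfold n1, C0; simpl; rewrite Rabs_R0; lra.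
  - rewrite dd_rec. eapply Rle_trans; [apply n1_add|].
    assert (A1 : n1 (Cmul (Cadd z h) (dd z h k)) <= rho * (INR k ^ 2 * rho ^ k * H)).
    { eapply Rle_trans; [apply n1_mul|]. apply Rmult_le_compat; try apply n1_ge0; auto.
      pose proof (n1_add z h); unfold rho; lra. }
    assert (A2 : n1 (Cmul (Cmul (ofR (INR (S k))) (Cpow z k)) (Cmul h h)) <= INR (S k) * rho ^ k * H).
    { eapply Rle_trans; [apply n1_mul|]. unfold ofR. rewrite n1_scal by apply pos_INR.
      apply Rmult_le_compat. apply Rmult_le_pos; [apply pos_INR|apply n1_ge0]. apply n1_ge0.
      apply Rmult_le_compat_l; [apply pos_INR|]. eapply Rle_trans; [apply n1_pow|apply pow_incr].
      split; [apply n1_ge0|unfold rho; lra].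
      eapply Rle_trans; [apply n1_mul|]. unfold H; simpl; lra. }
    assert (P : rho ^ k <= rho ^ S k) by (apply Rle_pow; [lra|lia]).
    assert (P0 : 0 <= rho ^ k) by (apply pow_le; lra).
    pose proof (pos_INR k). rewrite S_INR in *. simpl (rho ^ S k) in *. simpl (_ ^ 2) in *.
    assert (INR k * (INR k * 1) * rho ^ k * H * rho <= INR k * (INR k * 1) * (rho * rho ^ k) * H) by nra.
    assert ((INR k + 1) * rho ^ k * H <= (2 * INR k + 1) * (rho * rho ^ k) * H).
    { apply Rmult_le_compat_r; auto. nra. }
    nra.
Qed.

Lemma err_id a z h K :
  Csub (Csub (ps a (Cadd z h) (S K)) (ps a z (S K))) (Cmul (ps (Dc a) z K) h)
  = csum (fun k => Cmul (a (S k)) (dd z h k)) K.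
Proof.
  induction K.
  - unfold ps; simpl. ring.
  - change (ps a ?w (S (S K))) with (Cadd (ps a w (S K)) (Cmul (a (S K)) (Cpow w (S K)))).
    change (ps (Dc a) z (S K)) with (Cadd (ps (Dc a) z K) (Cmul (Dc a K) (Cpow z K))).
    simpl (csum _ (S K)). rewrite <- IHK. unfold dd, Dc. ring.
Qed.

Lemma pser_deriv a z : bnd a -> C_derivable_lim (pser a) z (pser (Dc a) z).
Proof.
  intros Hb eps Heps. set (rho := n1 z + 1).
  assert (Hr : 1 <= rho) by (pose proof (n1_ge0 z); unfold rho; lra).
  destruct (Hb (4 * rho)) as [C HC]; [lra|].
  assert (C0le : 0 <= C) by (specialize (HC O); simpl in HC; lra).
  exists (Rmin (1/2) (eps / (4 * (C + 1)))). split.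
  { apply Rmin_pos; [lra|]. apply Rdiv_lt_0_compat; lra. }
  intros h Hh0 Hhd.
  assert (Hd1 : Cnorm h < 1/2) by (eapply Rlt_le_trans; [exact Hhd|apply Rmin_l]).
  assert (Hd2 : Cnorm h < eps / (4 * (C + 1))) by (eapply Rlt_le_trans; [exact Hhd|apply Rmin_r]).
  pose proof (n1_le_Cnorm h) as Hn1. pose proof (n1_ge0 h) as Hn0.
  assert (Hh1 : n1 h <= 1) by lra.
  set (H := n1 h ^ 2).
  assert (Bd : forall K, n1 (csum (fun k => Cmul (a (S k)) (dd z h k)) K) <= C * H).
  { intro K. eapply Rle_trans; [apply n1_csum|].
    eapply Rle_trans with (rsum (fun k => H * (n1 (a (S k)) * (4 * rho) ^ S k)) K).
    - apply rsum_le; intros k _. eapply Rle_trans; [apply n1_mul|].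
      pose proof (dd_bound z h k Hh1). fold rho in H0. fold H in H0.
      pose proof (n1_ge0 (a (S k))).
      assert (INR k ^ 2 * rho ^ k <= (4 * rho) ^ S k).
      { rewrite Rpow_mult_distr. apply Rmult_le_compat. apply pow_le, pos_INR. apply pow_le; lra.
        - pose proof (INR_le_pow2 k). replace (INR k ^ 2) with (INR k * INR k) by ring.
          replace (4 ^ S k) with (4 * (2 ^ k * 2 ^ k)) by (simpl; rewrite <- Rpow_mult_distr; replace (2*2) with 4 by ring; reflexivity).
          pose proof (pos_INR k). pose proof (pow_le 2 k ltac:(lra)). nra.
        - apply Rle_pow; [lra|lia]. }
      assert (0 <= H) by (unfold H; nra).
      apply Rle_trans with (n1 (a (S k)) * (INR k ^ 2 * rho ^ k * H)).
      apply Rmult_le_compat_l; [exact H1|exact H0].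
      replace (n1 (a (S k)) * (INR k ^ 2 * rho ^ k * H)) with (H * (n1 (a (S k)) * (INR k ^ 2 * rho ^ k))) by ring.
      apply Rmult_le_compat_l; [exact H3|]. apply Rmult_le_compat_l; [exact H1|exact H2].
    - rewrite rsum_scal. rewrite Rmult_comm. apply Rmult_le_compat_r. unfold H; nra.
      eapply Rle_trans; [|apply (HC (S K))]. rewrite rsum_shift.
      pose proof (n1_ge0 (a O)). simpl (_ ^ 0). lra. }
  assert (Cv : ccv (fun K => csum (fun k => Cmul (a (S k)) (dd z h k)) K)
     (Csub (Csub (pser a (Cadd z h)) (pser a z)) (Cmul (pser (Dc a) z) h))).
  { assert (E : (fun K => csum (fun k => Cmul (a (S k)) (dd z h k)) K) =
       (fun K => Csub (Csub (ps a (Cadd z h) (S K)) (ps a z (S K))) (Cmul (ps (Dc a) z K) h))).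
    { apply functional_extensionality; intro K; symmetry; apply err_id. }
    rewrite E. apply ccv_sub. apply ccv_sub; apply ccv_shift; apply pser_cv; auto.
    apply ccv_mulc; apply pser_cv; apply bnd_Dc; auto. }
  pose proof (ccv_n1_le _ _ _ Cv Bd) as B.
  eapply Rle_trans; [apply Cnorm_le_n1|]. eapply Rle_trans; [exact B|].
  unfold H. assert (n1 h ^ 2 <= 4 * Cnorm h * Cnorm h) by (simpl; nra).
  assert (4 * C * Cnorm h <= eps).
  { assert (C * (eps / (4 * (C + 1))) <= eps / 4).
    { unfold Rdiv. rewrite <- Rmult_assoc. apply Rmult_le_reg_r with (4 * (C+1)). lra.
      rewrite Rmult_assoc, Rinv_l by lra. field_simplify; nra. }
    nra. }
  nra.
Qed.

Lemma Cnorm_real t : 0 <= t -> Cnorm (t, 0) = t.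
Proof. intros; unfold Cnorm; simpl. replace (t * t + 0 * 0) with (Rsqr t) by (unfold Rsqr; ring).
  apply sqrt_Rsqr; auto. Qed.

Lemma deriv_unique f z l1 l2 : C_derivable_lim f z l1 -> C_derivable_lim f z l2 -> l1 = l2.
Proof.
  intros H1 H2. set (d := Csub l1 l2).
  assert (Hd : forall eps, 0 < eps -> n1 d <= 4 * eps).
  { intros eps He. destruct (H1 eps He) as [d1 [Hd1 P1]]. destruct (H2 eps He) as [d2 [Hd2 P2]].
    set (t := Rmin d1 d2 / 2). assert (Ht : 0 < t) by (unfold t; pose proof (Rmin_glb_lt d1 d2 0 Hd1 Hd2); lra).
    assert (Ht1 : t < d1) by (unfold t; pose proof (Rmin_l d1 d2); lra).
    assert (Ht2 : t < d2) by (unfold t; pose proof (Rmin_r d1 d2); lra).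
    set (h := (t, 0) : Cx). assert (Hn : Cnorm h = t) by (apply Cnorm_real; lra).
    specialize (P1 h ltac:(rewrite Hn; lra) ltac:(rewrite Hn; lra)).
    specialize (P2 h ltac:(rewrite Hn; lra) ltac:(rewrite Hn; lra)).
    rewrite Hn in P1, P2.
    set (E1 := Csub (Csub (f (Cadd z h)) (f z)) (Cmul l1 h)) in *.
    set (E2 := Csub (Csub (f (Cadd z h)) (f z)) (Cmul l2 h)) in *.
    assert (Cmul (ofR t) d = Csub E2 E1) by (unfold E1, E2, d, h, ofR; ring).
    assert (n1 (Cmul (ofR t) d) <= 4 * eps * t).
    { rewrite H. eapply Rle_trans; [apply n1_sub|].
      pose proof (n1_le_Cnorm E1); pose proof (n1_le_Cnorm E2). lra. }
    unfold ofR in H0; rewrite n1_scal in H0 by lra.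
    apply Rmult_le_reg_l with t; lra. }
  assert (n1 d = 0).
  { pose proof (n1_ge0 d). destruct (Req_dec (n1 d) 0); auto.
    specialize (Hd (n1 d / 8) ltac:(lra)). lra. }
  apply n1_zero in H. replace l1 with (Cadd d l2) by (unfold d; ring). rewrite H; ring.
Qed.

Lemma translate g z beta l : C_derivable_lim g (Csub z beta) l ->
  C_derivable_lim (fun w => g (Csub w beta)) z l.
Proof.
  intros H eps He. destruct (H eps He) as [d [Hd P]]. exists d; split; auto.
  intros h H1 H2. replace (Csub (Cadd z h) beta) with (Cadd (Csub z beta) h) by ring. auto.
Qed.

Fixpoint lo (u : nat -> R) (n : nat) : R :=
  match n with O => 0
  | S n => if Rlt_dec (lo u n + (/3)^n / 3) (u n) then lo u n else lo u n + 2 * ((/3)^n / 3) end.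

Lemma not_in_range (u : nat -> R) : exists x, forall n, x <> u n.
Proof.
  set (L := fun n : nat => (/3)^n).
  assert (L0 : forall n, 0 < L n) by (intro; apply pow_lt; lra).
  assert (LS : forall n, L (S n) = L n / 3) by (intro; unfold L; simpl; field).
  assert (step1 : forall n, lo u n <= lo u (S n)).
  { intro n; simpl; destruct Rlt_dec; [lra|]. pose proof (L0 n); unfold L in *; lra. }
  assert (step2 : forall n, lo u (S n) + L (S n) <= lo u n + L n).
  { intro n; rewrite LS; simpl; destruct Rlt_dec; pose proof (L0 n); unfold L in *; lra. }
  assert (step3 : forall n, u n < lo u (S n) \/ lo u (S n) + L (S n) < u n).
  { intro n; rewrite LS; simpl; destruct Rlt_dec; pose proof (L0 n); unfold L in *; lra. }
  assert (mono : forall m n, (m <= n)%nat -> lo u m <= lo u n).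
  { intros m n H; induction H; [lra|]. pose proof (step1 m0); lra. }
  assert (nest : forall n m, (n <= m)%nat -> lo u m + L m <= lo u n + L n).
  { intros n m H; induction H; [lra|]. pose proof (step2 m); lra. }
  assert (allb : forall m n, lo u m <= lo u n + L n).
  { intros m n. destruct (Nat.le_ge_cases m n).
    - pose proof (mono m n H); pose proof (L0 n); lra.
    - pose proof (nest n m H); pose proof (L0 m); lra. }
  set (E := fun y => exists m, y = lo u m).
  assert (Eb : bound E). { exists (lo u O + L O); intros y [m ->]; apply allb. }
  destruct (completeness E Eb (ex_intro _ (lo u O) (ex_intro _ O eq_refl))) as [x [Hub Hlub]].
  exists x; intros n Hx.
  assert (A1 : lo u (S n) <= x) by (apply Hub; exists (S n); auto).
  assert (A2 : x <= lo u (S n) + L (S n)) by (apply Hlub; intros y [m ->]; apply allb).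
  destruct (step3 n); lra.
Qed.

Lemma bnd_blocks (a : nat -> Cx) (N : nat -> nat) :
  N O = O -> (forall n, (N n < N (S n))%nat) ->
  (forall n k, (N n <= k < N (S n))%nat -> n1 (a k) <= (/ (2 * INR (S n))) ^ k) ->
  bnd a.
Proof.
  intros HN0 HNS Ha.
  assert (Nmono : forall n m, (n <= m)%nat -> (N n <= N m)%nat).
  { intros n m H; induction H; [lia|]. specialize (HNS m); lia. }
  assert (blk : forall k, exists n, (N n <= k < N (S n))%nat).
  { induction k. exists O; rewrite HN0; specialize (HNS O); lia.
    destruct IHk as [n Hn]. destruct (Nat.lt_ge_cases (S k) (N (S n))).
    exists n; lia. exists (S n); specialize (HNS (S n)); lia. }
  intros r Hr. destruct (INR_archimed 1 r ltac:(lra)) as [n0 Hn0].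
  set (f := fun k => n1 (a k) * r ^ k).
  assert (f0 : forall k, 0 <= f k) by (intro; unfold f; apply Rmult_le_pos; [apply n1_ge0|apply pow_le; auto]).
  exists (rsum f (N n0) + 2).
  assert (forall K, rsum f K <= rsum f (N n0) + rsum (fun k => (/2)^k) K).
  { induction K.
    - simpl. pose proof (rsum_nonneg f (N n0) f0). lra.
    - destruct (Nat.lt_ge_cases K (N n0)).
      + pose proof (rsum_mono f (S K) (N n0) f0 ltac:(lia)).
        pose proof (rsum_nonneg (fun k => (/2)^k) (S K) ltac:(intro; apply pow_le; lra)). lra.
      + simpl. destruct (blk K) as [n Hn].
        assert (n0 <= n)%nat.
        { destruct (Nat.le_gt_cases n0 n); auto. pose proof (Nmono (S n) n0 ltac:(lia)). lia. }
        assert (f K <= (/2)^K).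
        { unfold f. specialize (Ha n K Hn).
          assert (Hrho : r * / (2 * INR (S n)) <= /2).
          { pose proof (le_INR _ _ H0). rewrite S_INR. assert (r <= INR n + 1) by lra.
            pose proof (pos_INR n). apply Rmult_le_reg_r with (2 * (INR n + 1)). lra.
            rewrite Rmult_assoc, Rinv_l by lra. field_simplify; lra. }
          apply Rle_trans with ((/ (2 * INR (S n))) ^ K * r ^ K).
          apply Rmult_le_compat_r; [apply pow_le; auto|exact Ha].
          rewrite <- Rpow_mult_distr. apply pow_incr. split; [|lra].
          apply Rmult_le_pos; [apply Rlt_le, Rinv_0_lt_compat; rewrite S_INR; pose proof (pos_INR n); lra|lra]. }
        lra. }
  intro K. pose proof (H K). pose proof (rsum_geom K). fold f. lra.
Qed.

Lemma rsum_term (u : nat -> R) K i : (forall k, 0 <= u k) -> (i < K)%nat -> u i <= rsum u K.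
Proof.
  intros h0; induction K as [|K IH]; intros hi; [lia|].
  simpl. destruct (Nat.eq_dec i K) as [->|ne].
  - pose proof (rsum_nonneg u K h0); lra.
  - pose proof (IH ltac:(lia)); pose proof (h0 K); lra.
Qed.

Lemma pow_decr (r : R) m n : 0 <= r <= 1 -> (m <= n)%nat -> r ^ n <= r ^ m.
Proof.
  intros hr; induction n as [|n IH]; intros h.
  - replace m with O by lia. lra.
  - destruct (Nat.eq_dec m (S n)) as [->|ne]; [lra|].
    pose proof (IH ltac:(lia)). simpl. pose proof (pow_le r n ltac:(lra)). nra.
Qed.

Definition kk (n : nat) : nat := (n - Nat.sqrt n * Nat.sqrt n)%nat.
Lemma kk_inf k T : exists n, (T <= n)%nat /\ kk n = k.
Proof.
  set (t := (T + k)%nat). exists (t * t + k)%nat. split; [unfold t; nia|].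
  unfold kk. rewrite (Nat.sqrt_unique (t * t + k) t); [lia|]. unfold t; split; nia.
Qed.

Lemma bnd_finite (a : nat -> Cx) K0 : (forall k, (K0 <= k)%nat -> a k = C0) -> bnd a.
Proof.
  intros H r Hr. set (f := fun k => n1 (a k) * r ^ k).
  assert (f0 : forall k, 0 <= f k) by (intro; unfold f; apply Rmult_le_pos; [apply n1_ge0|apply pow_le; auto]).
  exists (rsum f K0). intro K. destruct (Nat.le_ge_cases K K0).
  - apply rsum_mono; auto.
  - induction H0; [lra|]. simpl. unfold f at 2. rewrite H by lia.
    unfold n1, C0; simpl; rewrite Rabs_R0. lra.
Qed.

Lemma ccv_eventually u l c K0 : ccv u l -> (forall K, (K0 <= K)%nat -> u K = c) -> l = c.
Proof.
  intros Hc He. assert (ccv (fun m => u (m + K0)%nat) l) by (apply ccv_sub_seq; auto; intro; lia).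
  assert (E : (fun m => u (m + K0)%nat) = fun _ => c) by (apply functional_extensionality; intro; apply He; lia).
  rewrite E in H. eapply ccv_unique; [exact H|apply ccv_const].
Qed.

Lemma pser_C0 b : bnd b -> pser b C0 = b O.
Proof.
  intros Hb. apply (ccv_eventually (ps b C0) _ _ 1 (pser_cv b C0 Hb)).
  intros K HK. destruct K; [lia|]. clear HK. induction K.
  - unfold ps; simpl. ring.
  - change (ps b C0 (S (S K))) with (Cadd (ps b C0 (S K)) (Cmul (b (S K)) (Cpow C0 (S K)))).
    rewrite IHK. simpl. ring.
Qed.

From HB Require Import structures.
From mathcomp Require Import all_boot all_algebra.
Set Implicit Arguments. Unset Strict Implicit. Unset Printing Implicit Defensive.
Import Pilot.Defs.

Definition CC : Type := Cx.

Lemma Cx_eq (z w : Cx) : fst z = fst w -> snd z = snd w -> z = w.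
Proof. destruct z, w; simpl; intros; subst; reflexivity. Qed.

Definition CCeqb (z w : CC) : bool :=
  if excluded_middle_informative (z = w) then true else false.
Lemma CCeqP : Equality.axiom CCeqb.
Proof. move=> z w; rewrite /CCeqb; case: excluded_middle_informative => h; constructor => //. Qed.
HB.instance Definition _ := hasDecEq.Build CC CCeqP.

Definition CCfind (P : pred CC) (n : nat) : option CC :=
  match excluded_middle_informative (exists x, P x) with
  | left h => Some (proj1_sig (constructive_indefinite_description _ h))
  | right _ => None end.
Lemma CCfind_correct P n x : CCfind P n = Some x -> P x.
Proof. rewrite /CCfind; case: excluded_middle_informative => // h [<-].
  exact: (proj2_sig (constructive_indefinite_description _ h)). Qed.
Lemma CCfind_complete (P : pred CC) : (exists x, P x) -> exists n, CCfind P n.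
Proof. move=> h; exists 0%N; rewrite /CCfind; case: excluded_middle_informative => //. Qed.
Lemma CCfind_ext (P Q : pred CC) : P =1 Q -> CCfind P =1 CCfind Q.
Proof. move=> h; have e : P = Q by apply: functional_extensionality. by subst. Qed.
HB.instance Definition _ := hasChoice.Build CC CCfind_correct CCfind_complete CCfind_ext.

Lemma CaddA : associative (Cadd : CC -> CC -> CC).
Proof. move=> x y z; apply: Cx_eq; rewrite /Cadd /=; ring. Qed.
Lemma CaddC : commutative (Cadd : CC -> CC -> CC).
Proof. move=> x y; apply: Cx_eq; rewrite /Cadd /=; ring. Qed.
Lemma Cadd0 : left_id (C0 : CC) Cadd.
Proof. move=> x; apply: Cx_eq; rewrite /Cadd /=; ring. Qed.
Lemma CaddN : left_inverse (C0 : CC) Copp Cadd.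
Proof. move=> x; apply: Cx_eq; rewrite /Cadd /=; ring. Qed.
HB.instance Definition _ := GRing.isZmodule.Build CC CaddA CaddC Cadd0 CaddN.
Lemma CmulA : associative (Cmul : CC -> CC -> CC).
Proof. move=> x y z; apply: Cx_eq; rewrite /Cmul /=; ring. Qed.
Lemma CmulC : commutative (Cmul : CC -> CC -> CC).
Proof. move=> x y; apply: Cx_eq; rewrite /Cmul /=; ring. Qed.
Lemma Cmul1 : left_id (C1 : CC) Cmul.
Proof. move=> x; apply: Cx_eq; rewrite /Cmul /=; ring. Qed.
Lemma CmulDl : left_distributive (Cmul : CC -> CC -> CC) Cadd.
Proof. move=> x y z; apply: Cx_eq; rewrite /Cmul /Cadd /=; ring. Qed.
Lemma C1_neq0 : (C1 : CC) != C0.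
Proof. apply/eqP => h; have := f_equal fst h; rewrite /=; lra. Qed.
HB.instance Definition _ := GRing.Zmodule_isComNzRing.Build CC CmulA CmulC Cmul1 CmulDl C1_neq0.

Definition Cinv (z : CC) : CC :=
  (fst z / (fst z * fst z + snd z * snd z), - snd z / (fst z * fst z + snd z * snd z)).

Lemma Cx_neq0 (z : Cx) : z <> C0 -> fst z * fst z + snd z * snd z <> 0.
Proof. destruct z as [x y]; rewrite /=; move=> h e; apply: h.
 have hx : x = 0 by nra. have hy : y = 0 by nra. by subst. Qed.

Open Scope ring_scope.
Lemma CmulV (x : CC) : x != 0 -> GRing.mul (Cinv x) x = 1.
Proof. move/eqP=> h; have := Cx_neq0 h; destruct x as [a b] => /= hn.
  apply: Cx_eq; rewrite /Cmul /Cinv /= /C1 /=; field; exact hn. Qed.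
Lemma Cinv0 : Cinv (0 : CC) = 0.
Proof. apply: Cx_eq; rewrite /Cinv /=; unfold Rdiv; ring_simplify; rewrite ?Rmult_0_l ?Rmult_0_r //; lra. Qed.
HB.instance Definition _ := GRing.ComNzRing_isField.Build CC CmulV Cinv0.

Lemma addCE (x y : CC) : (x + y) = Cadd x y. Proof. reflexivity. Qed.
Lemma mulCE (x y : CC) : (x * y) = Cmul x y. Proof. reflexivity. Qed.
Lemma oppCE (x : CC) : (- x) = Copp x. Proof. reflexivity. Qed.
Lemma zeroCE : (0 : CC) = C0. Proof. reflexivity. Qed.
Lemma oneCE : (1 : CC) = C1. Proof. reflexivity. Qed.
Import GRing.Theory.

Lemma deriv_step (a : CC) m (q : {poly CC}) :
  (('X - a%:P)^+m.+1 * q)^`() = ('X - a%:P)^+m * (q *+ m.+1 + ('X - a%:P) * q^`()).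
Proof.
  rewrite derivM deriv_exp derivXsubC mul1r /= exprS.
  by rewrite mulrDr mulrnAl mulrnAr mulrA (mulrC ('X - a%:P)).
Qed.

Lemma deriv_key (a : CC) s : forall m (q : {poly CC}), exists r : {poly CC},
  (('X - a%:P)^+(m + s) * q)^`(s) = ('X - a%:P)^+m * r /\ r.[a] = q.[a] *+ (m + s)^_s.
Proof.
  elim: s => [|s IH] m q.
  - exists q; rewrite addn0 derivn0 ffactn0 mulr1n; split => //.
  - have [r [Hr Hra]] := IH m.+1 q.
    exists (r *+ m.+1 + ('X - a%:P) * r^`()); split.
    + by rewrite derivnS addnS -addSn Hr deriv_step.
    + rewrite !hornerE subrr mul0r addr0 hornerMn Hra -mulrnA; congr (_ *+ _).
      by rewrite addnS -addSn ffactnSr addnK.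
Qed.

Lemma vanish (a : CC) k s (q : {poly CC}) : (s < k)%N -> ((('X - a%:P)^+k * q)^`(s)).[a] = 0.
Proof.
  move=> hsk. have -> : k = ((k - s) + s)%N by rewrite subnK // ltnW.
  have [r [-> _]] := deriv_key a s (k - s) q.
  rewrite hornerM horner_exp hornerXsubC subrr expr0n.
  by rewrite subn_eq0 leqNgt hsk /= mul0r.
Qed.

Lemma nonvanish (a : CC) s (q : {poly CC}) : ((('X - a%:P)^+s * q)^`(s)).[a] = q.[a] *+ s`!.
Proof.
  have [r [Hr Hra]] := deriv_key a s 0 q.
  rewrite add0n in Hr Hra. by rewrite Hr expr0 mul1r Hra ffactnn.
Qed.

Lemma natrCC n : (n%:R : CC) = ofR (INR n).
Proof.
  elim: n => [|n IH]; first by apply: Cx_eq.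
  rewrite mulrS IH addCE oneCE. apply: Cx_eq; rewrite /ofR /Cadd /C1 -/(INR n.+1) ?S_INR /=; ring.
Qed.

Lemma natr_neq0 n : (0 < n)%N -> (n%:R : CC) != 0.
Proof.
  move=> hn; rewrite natrCC; apply/eqP => h. have := f_equal fst h; rewrite /ofR /=.
  have : Rlt 0 (INR n) by apply: lt_0_INR; apply/ltP.
  move=> ? ?; lra.
Qed.

Lemma mulrn_neq0 (x : CC) n : x != 0 -> (0 < n)%N -> x *+ n != 0.
Proof. move=> hx hn; rewrite -mulr_natr mulf_neq0 // natr_neq0 //. Qed.

Close Scope R_scope.
Open Scope ring_scope.
Import GRing.Theory.

Definition ecount (p : nat -> CC) (n : nat) : nat := count (fun j => p j == p n) (iota 0 n).
Definition Qp (p : nat -> CC) (n : nat) : {poly CC} :=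
  \prod_(j <- iota 0 n | p j != p n) ('X - (p j)%:P)^+n.
Definition Pp (p : nat -> CC) (n : nat) : {poly CC} := ('X - (p n)%:P)^+(ecount p n) * Qp p n.
Definition blk (p : nat -> CC) (N n : nat) : {poly CC} := 'X^N * Pp p n.

Lemma Pp_monic p n : Pp p n \is monic.
Proof.
  rewrite /Pp monicMl ?monic_exp ?monicXsubC //.
  by apply: monic_prod => j _; rewrite monic_exp ?monicXsubC.
Qed.

Lemma size_Pp_gt0 p n : (0 < size (Pp p n))%N.
Proof. by rewrite size_poly_gt0 monic_neq0 // Pp_monic. Qed.

Lemma ecount_le p j : (ecount p j <= j)%N.
Proof. by rewrite /ecount (leq_trans (count_size _ _)) // size_iota. Qed.

Lemma ecount_lt p j n : (j < n)%N -> p j = p n -> (ecount p j < ecount p n)%N.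
Proof.
  move=> hjn hj. rewrite /ecount.
  have -> : iota 0 n = iota 0 j ++ j :: iota j.+1 (n - j.+1).
    by rewrite -[j.+1]add0n -[_ :: _]/(iota j (1 + (n - j.+1))) -iotaD add1n subnSK // subnKC // ltnW.
  rewrite count_cat /= hj eqxx. by rewrite -addn1 leq_add2l addSn add0n ltnS leq_addr.
Qed.

Lemma blk_vanish p N n j : (j < n)%N -> ((blk p N n)^`(ecount p j)).[p j] = 0.
Proof.
  move=> hjn. case: (eqVneq (p j) (p n)) => hj.
  - rewrite /blk /Pp mulrCA -hj. exact (@vanish (p j) (ecount p n) (ecount p j) _ (ecount_lt hjn hj)).
  - rewrite /blk /Pp /Qp -big_filter (bigD1_seq j) /=; last first.
      by rewrite filter_uniq // iota_uniq.
      by rewrite mem_filter hj mem_iota /= add0n hjn.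
    rewrite mulrCA [X in _ * X]mulrCA mulrA [X in X * _]mulrC -mulrA.
    rewrite mulrCA. rewrite [X in (X)^`(_)]mulrCA.
    exact (@vanish (p j) n (ecount p j) _ (leq_ltn_trans (ecount_le p j) hjn)).
Qed.

Lemma blk_nz p N n : p n != 0 -> ((blk p N n)^`(ecount p n)).[p n] != 0.
Proof.
  move=> hp. rewrite /blk /Pp mulrCA nonvanish. apply: mulrn_neq0; last exact: fact_gt0.
  rewrite hornerM hornerXn mulf_neq0 ?expf_neq0 //.
  rewrite /Qp horner_prod prodf_seq_neq0. apply/allP => j _; apply/implyP => h.
  by rewrite horner_exp hornerXsubC expf_neq0 // subr_eq0 eq_sym.
Qed.

Close Scope ring_scope.
Open Scope R_scope.

Lemma CinvK (v : CC) : v <> C0 -> Cmul (Cinv v) v = C1.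
Proof. move=> h. have h' : (v != 0)%R by apply/eqP. exact: (CmulV h'). Qed.

Definition pick (Sv v : CC) (t : R) (Tg : CC -> Prop) : CC :=
  epsilon (inhabits C0) (fun c : CC => c <> C0 /\ n1 c <= t /\ Tg (Cadd Sv (Cmul c v))).

Lemma pick_spec Sv v t Tg : v <> C0 -> 0 < t -> dense_in_C Tg ->
  pick Sv v t Tg <> C0 /\ n1 (pick Sv v t Tg) <= t /\ Tg (Cadd Sv (Cmul (pick Sv v t Tg) v)).
Proof.
  move=> hv ht hT. rewrite /pick.
  suff hex : exists c : CC, c <> C0 /\ n1 c <= t /\ Tg (Cadd Sv (Cmul c v)).
    exact: (epsilon_spec (inhabits C0) (fun c : CC => c <> C0 /\ n1 c <= t /\ Tg (Cadd Sv (Cmul c v))) hex).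
  set c0 := ofR (t / 2). set z0 := Cadd Sv (Cmul c0 v).
  set M := n1 (Cinv v). have M0 : 0 <= M by apply: n1_ge0.
  have hr : 0 < t / (8 * (M + 1)) by apply: Rdiv_lt_0_compat; lra.
  have [w [hw hwz]] := hT z0 _ hr.
  set d := Cmul (Csub w z0) (Cinv v).
  have hd : n1 d <= t / 4.
  { rewrite /d; apply: Rle_trans; first exact: n1_mul.
    have h1 := n1_le_Cnorm (Csub w z0).
    have h2 : n1 (Csub w z0) <= 2 * (t / (8 * (M + 1))) by lra.
    apply: Rle_trans; first by apply: Rmult_le_compat_r; [exact M0|exact h2].
    have : 2 * (t / (8 * (M + 1))) * M = t / 4 * (M / (M + 1)) by field; lra.
    move=> ->. have : M / (M + 1) <= 1.
    { apply: (Rmult_le_reg_r (M + 1)); first lra. rewrite /Rdiv Rmult_assoc Rinv_l; lra. }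
    move=> hm. have : 0 <= t / 4 by lra. move=> ? ; nra. }
  exists (Cadd c0 d). split; [|split].
  - move=> h. have := f_equal fst h. rewrite /Cadd /c0 /ofR /= => e.
    have h1 := fst_le_n1 d. have h2 := Rle_abs (- fst d). rewrite Rabs_Ropp in h2. have e2 : t / 2 + fst d = 0 := e. lra.
  - apply: Rle_trans; first exact: n1_add.
    have hc0 : n1 c0 = t / 2 by rewrite /c0 /ofR /n1 /= Rabs_R0 Rabs_right; lra.
    lra.
  - have E1 : @eq Cx (Cadd Sv (Cmul (Cadd c0 d) v)) (Cadd z0 (Cmul (Csub w z0) (Cmul (Cinv v) v))).
      rewrite /d /z0 /c0. move: (ofR (t / 2)) (Cinv v) => a b. ring.
    rewrite E1 CinvK //. have E2 : @eq Cx (Cadd z0 (Cmul (Csub w z0) C1)) w by ring.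
    rewrite E2. exact: hw.
Qed.

Definition tau (n K : nat) (M : R) : R := (/ (2 * INR (S n))) ^ K / (1 + M).
Close Scope R_scope.
Open Scope ring_scope.
Definition pc (P : {poly CC}) (i : nat) : CC := P`_i.
Definition Msum (P : {poly CC}) : R := rsum (fun i => n1 (pc P i)) (size P).

Definition cfun (p : nat -> CC) (T : nat -> CC -> Prop) (n : nat) (st : {poly CC} * nat) : CC :=
  pick (((st.1)^`(ecount p n)).[p n]) (((blk p st.2 n)^`(ecount p n)).[p n])
       (tau n (st.2 + size (Pp p n)) (Msum (Pp p n))) (T n).
Definition step (p : nat -> CC) (T : nat -> CC -> Prop) (n : nat) (st : {poly CC} * nat)
  : {poly CC} * nat :=
  ((st.1 + cfun p T n st *: blk p st.2 n), (st.2 + size (Pp p n))%N).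
Fixpoint stage (p : nat -> CC) (T : nat -> CC -> Prop) (n : nat) : {poly CC} * nat :=
  match n with O => (0, 0%N) | S n' => step p T n' (stage p T n') end.
Definition Fs p T n := (stage p T n).1.
Definition Ns p T n := (stage p T n).2.
Definition cs p T n := cfun p T n (stage p T n).
Definition acoef p T (k : nat) : CC := (Fs p T k.+1)`_k.
Close Scope ring_scope.
Open Scope R_scope.


Close Scope R_scope.
Open Scope ring_scope.

Lemma Ns0 p T : Ns p T 0 = 0%N. Proof. by []. Qed.
Lemma NsS p T n : Ns p T n.+1 = (Ns p T n + size (Pp p n))%N. Proof. by []. Qed.
Lemma FsS p T n : Fs p T n.+1 = Fs p T n + cs p T n *: blk p (Ns p T n) n. Proof. by []. Qed.

Lemma Ns_lt p T n : (Ns p T n < Ns p T n.+1)%N.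
Proof. by rewrite NsS -addn1 leq_add2l size_Pp_gt0. Qed.
Lemma Ns_mono p T n m : (n <= m)%N -> (Ns p T n <= Ns p T m)%N.
Proof.
  elim: m => [|m IH]; first by rewrite leqn0 => /eqP ->.
  rewrite leq_eqVlt => /orP [/eqP -> //|]; rewrite ltnS => h.
  exact: (leq_trans (IH h) (ltnW (Ns_lt p T m))).
Qed.
Lemma Ns_ge p T n : (n <= Ns p T n)%N.
Proof. elim: n => [//|n IH]. exact: (leq_ltn_trans IH (Ns_lt p T n)). Qed.

Lemma blk_coef p N n k : (blk p N n)`_k = if (k < N)%N then 0 else (Pp p n)`_(k - N).
Proof. by rewrite /blk coefXnM. Qed.

Lemma Fs_high p T n k : (Ns p T n <= k)%N -> (Fs p T n)`_k = 0.
Proof.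
  elim: n k => [|n IH] k hk; first by rewrite /Fs /= coef0.
  rewrite FsS coefD coefZ IH; last exact: (leq_trans (ltnW (Ns_lt p T n)) hk).
  rewrite blk_coef. move: hk; rewrite NsS => hk.
  have : ~~ (k < Ns p T n)%N by rewrite -leqNgt (leq_trans (leq_addr _ _) hk).
  move/negPf => ->. rewrite nth_default ?mulr0 ?add0r //.
  by rewrite leq_subRL ?(leq_trans (leq_addr _ _) hk) // addnC.
Qed.

Lemma Fs_stable p T n m k : (n <= m)%N -> (k < Ns p T n)%N -> (Fs p T m)`_k = (Fs p T n)`_k.
Proof.
  move=> hnm hk; elim: m hnm => [|m IH]; first by rewrite leqn0 => /eqP ->.
  rewrite leq_eqVlt => /orP [/eqP -> //|]; rewrite ltnS => h.
  rewrite FsS coefD coefZ blk_coef.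
  have -> : (k < Ns p T m)%N by exact: (leq_trans hk (Ns_mono p T h)).
  by rewrite mulr0 addr0 IH.
Qed.

Lemma acoef_eq p T n k : (k < Ns p T n)%N -> acoef p T k = (Fs p T n)`_k.
Proof.
  move=> hk. rewrite /acoef. case: (leqP n k.+1) => h.
  - by rewrite (Fs_stable h hk).
  - rewrite (Fs_stable (ltnW h) _) //. exact: (leq_trans (Ns_ge p T k.+1) (leqnn _)).
Qed.

Lemma Fs_poly p T n : Fs p T n = \poly_(k < Ns p T n) acoef p T k.
Proof.
  apply/polyP => k. rewrite coef_poly. case: ifP => h.
  - by rewrite (acoef_eq h).
  - by rewrite Fs_high // leqNgt h.
Qed.

Lemma acoef_blk p T n k : (Ns p T n <= k < Ns p T n.+1)%N ->
  acoef p T k = cs p T n * (Pp p n)`_(k - Ns p T n).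
Proof.
  case/andP => h1 h2. rewrite (acoef_eq h2) FsS coefD coefZ Fs_high // add0r blk_coef.
  by rewrite ltnNge h1.
Qed.

Lemma acoef_lead p T n : acoef p T (Ns p T n.+1).-1 = cs p T n.
Proof.
  have hs := size_Pp_gt0 p n.
  rewrite (acoef_blk (n := n)); last first.
    rewrite NsS; apply/andP; split.
    - by rewrite -ltnS prednK ?addn_gt0 ?hs ?orbT // -addn1 leq_add2l.
    - by rewrite prednK ?addn_gt0 ?hs ?orbT.
  rewrite NsS -subn1 -addnBA // addKn subn1.
  by rewrite -lead_coefE (monicP (Pp_monic p n)) mulr1.
Qed.

Lemma stage_inv p T n j : (j < n)%N ->
  ((Fs p T n)^`(ecount p j)).[p j] = ((Fs p T j.+1)^`(ecount p j)).[p j].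
Proof.
  elim: n => [//|n IH]. rewrite ltnS leq_eqVlt => /orP [/eqP -> //|h].
  by rewrite FsS derivnD derivnZ hornerD hornerZ blk_vanish // mulr0 addr0 IH.
Qed.

Lemma stage_val p T n : ((Fs p T n.+1)^`(ecount p n)).[p n] =
  Cadd (((Fs p T n)^`(ecount p n)).[p n])
       (Cmul (cs p T n) (((blk p (Ns p T n) n)^`(ecount p n)).[p n])).
Proof. by rewrite FsS derivnD derivnZ hornerD hornerZ. Qed.

Lemma CpowE (w : CC) K : Cpow w K = w ^+ K.
Proof. elim: K => [//|K IH]. by rewrite exprS /= IH. Qed.

Lemma ps_poly (a : nat -> CC) (w : CC) K : ps a w K = (\poly_(k < K) a k).[w].
Proof.
  rewrite horner_poly. elim: K => [|K IH]; first by rewrite big_ord0.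
  by rewrite big_ord_recr /= -IH -CpowE.
Qed.

Lemma iter_Dc s a : Nat.iter s.+1 Dc a = Nat.iter s Dc (Dc a).
Proof. by rewrite Nat.iter_succ_r. Qed.

Lemma Dc_poly (a : nat -> CC) n : (\poly_(k < n.+1) a k)^`() = \poly_(k < n) (Dc a k : CC).
Proof.
  apply/polyP => k. rewrite coef_deriv !coef_poly ltnS.
  case: ifP => h; last by rewrite mul0rn.
  rewrite /Dc -natrCC. exact: (esym (mulr_natl (a k.+1) k.+1)).
Qed.

Lemma ps_iter s : forall (a : nat -> CC) (w : CC) K, ps (Nat.iter s Dc a) w K = ((\poly_(k < K + s) (a k : CC))^`(s)).[w].
Proof.
  elim: s => [|s IH] a w K; first by rewrite addn0 derivn0 ps_poly.
  by rewrite iter_Dc IH derivSn addnS Dc_poly.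
Qed.

Close Scope ring_scope.
Open Scope R_scope.

Lemma bnd_iter s a : bnd a -> bnd (Nat.iter s Dc a).
Proof. elim: s => [//|s IH] h. rewrite /=. apply: bnd_Dc. exact: IH. Qed.

Lemma stage_spec p T n : (p n != 0)%R -> dense_in_C (T n) ->
  cs p T n <> C0 /\ n1 (cs p T n) <= tau n (Ns p T n.+1) (Msum (Pp p n)) /\
  T n (((Fs p T n.+1)^`(ecount p n)).[p n])%R.
Proof.
  move=> hp hd. rewrite stage_val /cs /cfun.
  apply: pick_spec => //.
  - by move/eqP: (blk_nz (Ns p T n) hp).
  - rewrite /tau. apply: Rdiv_lt_0_compat.
    + apply: pow_lt. apply: Rinv_0_lt_compat. have := pos_INR n. rewrite S_INR. lra.
    + have := rsum_nonneg (fun i => n1 (pc (Pp p n) i)) (size (Pp p n)) (fun i => n1_ge0 _).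
      rewrite /Msum. lra.
Qed.

Lemma acoef_bound p T n k : (p n != 0)%R -> dense_in_C (T n) ->
  (Ns p T n <= k < Ns p T n.+1)%N ->
  n1 (acoef p T k) <= (/ (2 * INR (S n))) ^ k.
Proof.
  move=> hp hd hk. have [_ [hc _]] := stage_spec hp hd.
  rewrite (acoef_blk hk). set P := Pp p n. set i := (k - Ns p T n)%N.
  set rho := / (2 * INR (S n)).
  have hrho : 0 <= rho <= 1.
  { rewrite /rho; have := pos_INR n; rewrite S_INR => ?. split.
    - apply: Rlt_le; apply: Rinv_0_lt_compat; lra.
    - rewrite -Rinv_1; apply: Rinv_le_contravar; lra. }
  set M := Msum P.
  have M0 : 0 <= M by apply: rsum_nonneg => ?; apply: n1_ge0.
  have hi : n1 (pc P i) <= M.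
  { apply: (rsum_term (fun j => n1 (pc P j))); first by move=> ?; apply: n1_ge0.
    apply/ltP. case/andP: hk => h1 h2. rewrite /i ltn_subLR // addnC -NsS //. }
  apply: Rle_trans; first exact: n1_mul.
  have hK : rho ^ Ns p T n.+1 <= rho ^ k.
  { apply: pow_decr => //. apply/leP. case/andP: hk => _ h2. exact: ltnW. }
  move: hc; rewrite /tau -/rho -/M -/P => hc.
  have hpow : 0 <= rho ^ Ns p T n.+1 by apply: pow_le; lra.
  have : rho ^ Ns p T n.+1 / (1 + M) * M <= rho ^ Ns p T n.+1.
  { rewrite /Rdiv Rmult_assoc. rewrite -[X in _ <= X]Rmult_1_r. apply: Rmult_le_compat_l => //.
    apply: (Rmult_le_reg_l (1 + M)); first lra.
    rewrite -Rmult_assoc Rinv_r; lra. }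
  move=> h. have := n1_ge0 (cs p T n). have := n1_ge0 (pc P i). rewrite /pc in hi *. nra.
Qed.

Import GRing.Theory.
Close Scope ring_scope.
Open Scope R_scope.
Lemma acoef_bnd p T : (forall n, (p n != 0)%R) -> (forall n, dense_in_C (T n)) -> bnd (acoef p T).
Proof.
  move=> hp hd. apply: (@bnd_blocks _ (Ns p T)) => //.
  - move=> n; apply/ltP; exact: Ns_lt.
  - move=> n k [h1 h2]. apply: acoef_bound => //. apply/andP; split; [exact/leP|exact/ltP].
Qed.

Lemma pser_at p T j : bnd (acoef p T) ->
  pser (Nat.iter (ecount p j) Dc (acoef p T)) (p j) = (((Fs p T j.+1)^`(ecount p j)).[p j])%R.
Proof.
  move=> hb. set s := ecount p j. set u := ps (Nat.iter s Dc (acoef p T)) (p j).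
  have hc := pser_cv _ (p j) (bnd_iter s hb).
  set phi := fun m => (Ns p T (m + j.+1) - s)%N.
  have hsj : (s <= j)%N by exact: ecount_le.
  have hphi : forall m, (m <= phi m)%coq_nat.
  { move=> m; apply/leP. rewrite /phi leq_subRL.
    - apply: (leq_trans _ (Ns_ge p T _)). rewrite addnC leq_add2l. exact: (leq_trans hsj (leqnSn j)).
    - apply: (leq_trans hsj). apply: (leq_trans _ (Ns_ge p T _)). by rewrite addnS ltnW // ltnS leq_addl. }
  have hcs := ccv_sub_seq u _ phi hphi hc.
  apply: (ccv_eventually _ _ _ O hcs) => m _.
  rewrite /u ps_iter /phi subnK; last first.
    apply: (leq_trans hsj). apply: (leq_trans _ (Ns_ge p T _)). by rewrite addnS ltnW // ltnS leq_addl.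
  rewrite -Fs_poly. apply: stage_inv. by rewrite addnS ltnS leq_addl.
Qed.

Close Scope R_scope.
Open Scope ring_scope.

Lemma iota_split j n : (j < n)%N -> iota 0 n = iota 0 j ++ j :: iota j.+1 (n - j.+1).
Proof.
  move=> h. by rewrite -[j.+1]add0n -[_ :: _]/(iota j (1 + (n - j.+1))) -iotaD add1n subnSK // subnKC // ltnW.
Qed.

Lemma visits (p : nat -> CC) (x : CC) : (forall T, exists n, (T <= n)%N /\ p n = x) ->
  forall s, exists n, p n = x /\ ecount p n = s.
Proof.
  move=> hv.
  set cnt := fun m => count (fun j => p j == x) (iota 0 m).
  have ec : forall n, p n = x -> ecount p n = cnt n.
  { move=> n hn. rewrite /ecount /cnt hn. by []. }
  suff H : forall s, exists n, p n = x /\ cnt n = s.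
  { move=> s; have [n [h1 h2]] := H s; exists n; split => //; by rewrite ec. }
  elim => [|s [n [hn hc]]].
  - have hex : exists n, p n == x by have [n [_ h]] := hv O; exists n; apply/eqP.
    case: (ex_minnP hex) => n0 /eqP hn0 hmin. exists n0; split => //.
    apply/eqP; rewrite /cnt eqn0Ngt -has_count; apply/hasPn => j; rewrite mem_iota add0n /= => hj.
    apply/negP => /hmin. by rewrite leqNgt hj.
  - have hex : exists m, (n < m)%N && (p m == x).
    { have [m [h1 h2]] := hv n.+1; exists m; by rewrite h1 h2 eqxx. }
    case: (ex_minnP hex) => m /andP [hnm /eqP hm] hmin. exists m; split => //.
    rewrite /cnt (iota_split hnm) count_cat /= hn eqxx -/(cnt n) hc.
    suff -> : count (fun j => p j == x) (iota n.+1 (m - n.+1)) = 0%N.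
      by rewrite -[(true + 0)%N]/1%N addn1.
    apply/eqP; rewrite eqn0Ngt -has_count; apply/hasPn => j; rewrite mem_iota subnKC // => /andP [h1 h2].
    apply/negP => hj. have := hmin j; rewrite h1 hj => /(_ isT). by rewrite leqNgt h2.
Qed.

Lemma Csum_csum (u : nat -> Cx) d : Csum u d = csum u d.+1.
Proof. elim: d => [|d IH]; first by rewrite /=; ring. by rewrite /= IH. Qed.

Lemma Csum_horner (c : nat -> CC) d (z : CC) :
  Csum (fun k => Cmul (c k) (Cpow z k)) d = (\poly_(k < d.+1) c k).[z].
Proof. by rewrite Csum_csum -ps_poly. Qed.

Lemma poly_coefs (q : {poly CC}) K : (size q <= K)%N -> \poly_(k < K) q`_k = q.
Proof.
  move=> h; apply/polyP => k; rewrite coef_poly. case: ifP => // hk.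
  by rewrite nth_default // (leq_trans h) // leqNgt hk.
Qed.

Lemma poly_deriv (q : {poly CC}) (w : CC) : C_derivable_lim (fun z => q.[z]) w (q^`().[w]).
Proof.
  set b := fun k => q`_k.
  have hb : bnd b by apply: (bnd_finite b (size q)) => k /leP hk; rewrite /b nth_default.
  have e1 : pser b = fun z => q.[z].
  { apply: functional_extensionality => z.
    apply: (ccv_eventually _ _ _ (size q) (pser_cv b z hb)) => K /leP hK.
    by rewrite ps_poly poly_coefs. }
  have e2 : pser (Dc b) w = q^`().[w].
  { apply: (ccv_eventually _ _ _ (size q) (pser_cv (Dc b) w (bnd_Dc _ hb))) => K /leP hK.
    have := ps_iter 1 b w K. rewrite /= => ->.
    by rewrite poly_coefs // addn1 (leq_trans hK). }
  rewrite -e1 -e2. exact: pser_deriv.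
Qed.

Lemma iter_at0 (a : nat -> CC) t : bnd a -> pser (Nat.iter t Dc a) C0 = a t *+ t`!.
Proof.
  move=> hb. rewrite pser_C0; last exact: bnd_iter.
  have := ps_iter t a C0 1. rewrite /ps /=.
  have -> : @eq Cx (Cadd C0 (Cmul (Nat.iter t Dc a O) C1)) (Nat.iter t Dc a O) by ring.
  move=> ->. have -> : C0 = (0 : CC) by [].
  by rewrite horner_coef0 coef_derivn addn0 coef_poly add1n ltnSn ffactnn.
Qed.

Lemma deriv_poly_step (D : nat -> Cx -> Cx) (Q : {poly CC}) s :
  (forall z, C_derivable_lim (D s) z (D s.+1 z)) ->
  (forall z, D s z = (Q^`(s)).[z]) -> forall z, D s.+1 z = (Q^`(s.+1)).[z].
Proof.
  move=> hd hs z. have e : D s = (fun w => (Q^`(s)).[w]) by apply: functional_extensionality.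
  apply: (deriv_unique _ _ _ _ (hd z)). rewrite e derivnS. exact: poly_deriv.
Qed.

Lemma high_deriv_zero (Q : {poly CC}) d k (z : CC) : (d.+1 <= k)%N ->
  Q = \poly_(i < d.+1) Q`_i -> (Q^`(k)).[z] = 0.
Proof.
  move=> hk hQ. rewrite derivn_poly0 ?horner0 //. rewrite hQ.
  exact: (leq_trans (size_poly _ _) hk).
Qed.

Lemma cs_mul_nz (c : CC) k : c <> C0 -> c *+ k`! != 0.
Proof. move=> h; apply: mulrn_neq0; [by apply/eqP|exact: fact_gt0]. Qed.

Close Scope ring_scope.
Open Scope R_scope.

Theorem theorem1 (A : Cx -> Prop) (E : Cx -> nat -> Cx -> Prop)
  (hA : countable_set A)
  (hE : forall (alpha : Cx) (s : nat), A alpha -> dense_in_C (E alpha s)) :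
  exists (f : Cx -> Cx) (D : nat -> Cx -> Cx),
    transcendental_entire f /\ derivatives_of f D /\
    (forall (alpha : Cx) (s : nat), A alpha -> E alpha s (D s alpha)).
Proof.
  destruct hA as [g hg].
  destruct (not_in_range (fun n => fst (g n))) as [x hx].
  pose beta : Cx := (x, 0).
  have gb : forall n, g n <> beta.
  { move=> n h. apply: (hx n). by rewrite h. }
  pose p : nat -> CC := fun n => Csub (g (kk n)) beta.
  have hp : forall n, (p n != 0)%R.
  { move=> n; apply/eqP => h. apply: (gb (kk n)).
    have e : @eq Cx (g (kk n)) (Cadd (Csub (g (kk n)) beta) beta) by ring.
    rewrite e. change (Csub (g (kk n)) beta) with (p n). rewrite h.
    have -> : (0%R : CC) = C0 by []. ring. }
  pose T : nat -> CC -> Prop := fun n w => A (g (kk n)) -> E (g (kk n)) (ecount p n) w.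
  have hT : forall n, dense_in_C (T n).
  { move=> n z eps heps. case: (classic (A (g (kk n)))) => hAn.
    - have [w [hw1 hw2]] := hE (g (kk n)) (ecount p n) hAn z eps heps.
      exists w; split => //.
    - exists z; split; first by move=> /hAn.
      have -> : Csub z z = (0, 0) by apply: Cx_eq'; rewrite /Csub /Cadd /Copp /=; ring.
      rewrite /Cnorm /=. have -> : 0 * 0 + 0 * 0 = 0 by ring. by rewrite sqrt_0. }
  pose a := acoef p T.
  have hb : bnd a := acoef_bnd hp hT.
  pose D := fun s z => pser (Nat.iter s Dc a) (Csub z beta).
  have hder : derivatives_of (D O) D.
  { split => // s z. apply: translate. exact: (pser_deriv _ _ (bnd_iter s hb)). }
  exists (D O), D. split; [|split; [exact: hder|]].
  - split.
    + move=> z; exists (D 1%nat z); exact: (hder.2 O z).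
    + move=> [d [c hc]]. pose Q := (\poly_(k < d.+1) (c k : CC))%R.
      have hQ : Q = (\poly_(i < d.+1) Q`_i)%R.
      { apply/polyP => i. rewrite !coef_poly. by case: ifP. }
      have hD : forall s z, D s z = ((Q^`(s)).[z])%R.
      { elim => [|s IH] z.
        - by rewrite hc Csum_horner derivn0.
        - exact: (deriv_poly_step (hder.2 s) IH). }
      pose n := d.+1. pose k := (Ns p T n.+1).-1.
      have hk : (d.+1 <= k)%N.
      { rewrite /k -ltnS prednK; last exact: (leq_ltn_trans (leq0n _) (Ns_lt p T n)).
        exact: (leq_trans (ltnSn _) (Ns_ge p T n.+1)). }
      have h0 := high_deriv_zero beta hk hQ. rewrite -hD in h0.
      have e : D k beta = pser (Nat.iter k Dc a) C0.
      { rewrite /D. congr pser. apply: Cx_eq'; rewrite /Csub /Cadd /Copp /= /C0 /=; ring. }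
      rewrite e iter_at0 // /a /k acoef_lead in h0.
      have [hc0 _] := stage_spec (hp n) (hT n).
      by move: (cs_mul_nz (Ns p T n.+1).-1 hc0); rewrite h0 eqxx.
  - move=> alpha s hAa. destruct (hg alpha hAa) as [k0 hk0].
    have hv : forall T0, exists n, (T0 <= n)%N /\ p n = Csub alpha beta.
    { move=> T0. destruct (kk_inf k0 T0) as [n [h1 h2]]. exists n; split; first exact/leP.
      by rewrite /p h2 hk0. }
    have [n [hpn hen]] := visits hv s.
    have [_ [_ hTn]] := stage_spec (hp n) (hT n).
    have gkn : g (kk n) = alpha.
    { have e1 : @eq Cx (g (kk n)) (Cadd (Csub (g (kk n)) beta) beta) by ring.
      have e2 : @eq Cx alpha (Cadd (Csub alpha beta) beta) by ring.
      rewrite e1 e2. change (Csub (g (kk n)) beta) with (p n). by rewrite hpn. }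
    have := hTn; rewrite /T gkn => /(_ hAa). rewrite hen.
    rewrite /D -hpn -hen pser_at //.
Qed.
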